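(* Let $H$ be a Kekul\'ean hexagonal system and $n\ge 0$. For every Clar cover $C$ of $H$ with exactly $n$ hexagons, the graph $f(C)$ is isomorphic to the $n$-cube $Q_n$; hence $f(C)$ is an induced subgraph of $R(H)$ isomorphic to $Q_n$.
   Context: A hexagonal system is a 2-connected finite plane graph in which every interior face is a regular hexagon of side length one; its hexagons are the boundaries of its interior faces; it is Kekul\'ean if it has a perfect matching. A Clar cover of $H$ is a spanning subgraph each of whose components is a hexagon of $H$ or a single edge. The resonance graph $R(H)$ has the perfect matchings of $H$ as vertices, two adjacent iff their symmetric difference is the edge set of a hexagon of $H$. For a Clar cover $C$, $f(C)$ denotes the subgraph of $R(H)$ induced by all perfect matchings $M$ of $H$ such that every hexagon component of $C$ is $M$-alternating (its edges alternately in and not in $M$) and every single-edge component of $C$ belongs to $M$. *)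

(* Defs.v *)
From HB Require Import structures.
From mathcomp Require Import all_boot all_order all_algebra.
From mathcomp Require Import finmap.
Set Implicit Arguments. Unset Strict Implicit. Unset Printing Implicit Defensive.
Import Order.TTheory GRing.Theory Num.Theory.
Local Open Scope fset_scope.

(* The hexagonal (honeycomb) lattice, in its "brick wall" combinatorial model:
   vertices are integer points (i,j); horizontal edges (i,j)-(i+1,j) always,
   vertical edges (i,j)-(i,j+1) exactly when i+j is even.  The hexagonal cells
   are indexed by their lower-left corner (i,j) with i+j even; the cell (i,j)
   has the six vertices (i..i+2, j..j+1). *)
Definition Vertex := (int * int)%type.
Definition Cell := (int * int)%type.
(* edge (v, false) = horizontal edge v -- v+(1,0);
   edge (v, true)  = vertical edge   v -- v+(0,1). *)
Definition Edge := ((int * int) * bool)%type.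

Definition valid_cell (c : Cell) : bool := modz (c.1 + c.2)%R 2 == 0.

Definition ends (e : Edge) : {fset Vertex} :=
  if e.2 then [fset e.1; (e.1.1, e.1.2 + 1)%R]
  else [fset e.1; (e.1.1 + 1, e.1.2)%R].

Definition hex_vertices (c : Cell) : {fset Vertex} :=
  let: (i, j) := c in
  [fset (i, j); (i + 1, j)%R; (i + 2, j)%R;
        (i, j + 1)%R; (i + 1, j + 1)%R; (i + 2, j + 1)%R].

(* the six edges of the hexagon, in cyclic order around it *)
Definition hex_cycle (c : Cell) : seq Edge :=
  let: (i, j) := c in
  [:: ((i, j), false); ((i + 1, j)%R, false); ((i + 2, j)%R, true);
      ((i + 1, j + 1)%R, false); ((i, j + 1)%R, false); ((i, j), true)].

Definition hex_edges (c : Cell) : {fset Edge} := [fset e | e in hex_cycle c].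

(* edge-adjacency of cells (they share an edge) *)
Definition cell_adj (c d : Cell) : bool :=
  d \in [:: (c.1 + 2, c.2)%R; (c.1 - 2, c.2)%R; (c.1 + 1, c.2 + 1)%R;
            (c.1 - 1, c.2 + 1)%R; (c.1 + 1, c.2 - 1)%R; (c.1 - 1, c.2 - 1)%R].

Definition VH (S : {fset Cell}) : {fset Vertex} := \bigcup_(c <- S) hex_vertices c.
Definition EH (S : {fset Cell}) : {fset Edge} := \bigcup_(c <- S) hex_edges c.

Definition adjE (E : {fset Edge}) (u v : Vertex) : bool :=
  (u != v) && has (fun e => ends e == [fset u; v]) E.

(* 2-connected: at least 3 vertices, and for every vertex w (which may also be
   outside the graph, giving plain connectedness) any two vertices distinct
   from w are joined by a path avoiding w. *)
Definition two_connected (S : {fset Cell}) : Prop :=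
  (3 <= #|` VH S|)%N /\
  forall w u v, u \in VH S -> v \in VH S -> u != w -> v != w ->
    exists p : seq Vertex, path (adjE (EH S)) u p /\ last u p = v /\
      all (fun x => (x \in VH S) && (x != w)) p.

(* Every bounded face of the plane graph H(S) is one of its cells: every cell
   not in S lies in the unbounded region of the complement, i.e. is joined by
   edge-adjacent cells not in S to cells arbitrarily far away. *)
Definition no_holes (S : {fset Cell}) : Prop :=
  forall c : Cell, valid_cell c -> c \notin S ->
    forall N : nat, exists p : seq Cell,
      path cell_adj c p /\ all (fun d => d \notin S) p /\
      (N <= absz (last c p).1 + absz (last c p).2)%N.

Definition hexagonal_system (S : {fset Cell}) : Prop :=
  (forall c, c \in S -> valid_cell c) /\ two_connected S /\ no_holes S.

Definition perfect_matching (S : {fset Cell}) (M : {fset Edge}) : Prop :=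
  M `<=` EH S /\ forall v, v \in VH S -> #|` [fset e in M | v \in ends e]| = 1%N.

Definition kekulean (S : {fset Cell}) : Prop := exists M, perfect_matching S M.

Definition alternating (M : {fset Edge}) (c : Cell) : bool :=
  cycle (fun x y : bool => x != y) [seq (e \in M) | e <- hex_cycle c].

Definition symdiff (M N : {fset Edge}) : {fset Edge} := (M `\` N) `|` (N `\` M).

Definition res_adj (S : {fset Cell}) (M N : {fset Edge}) : Prop :=
  perfect_matching S M /\ perfect_matching S N /\
  exists2 h, h \in S & symdiff M N = hex_edges h.

Definition reach (F : {fset Edge}) (u v : Vertex) : Prop :=
  exists p : seq Vertex, path (adjE F) u p /\ last u p = v.

Definition component_is (F : {fset Edge}) (v : Vertex)
  (X : {fset Vertex}) (EX : {fset Edge}) : Prop :=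
  (forall x, reach F v x <-> x \in X) /\ [fset e in F | ends e `<=` X] = EX.

Definition hex_comp (S : {fset Cell}) (F : {fset Edge}) (h : Cell) : Prop :=
  h \in S /\ exists2 v, v \in VH S & component_is F v (hex_vertices h) (hex_edges h).

Definition edge_comp (S : {fset Cell}) (F : {fset Edge}) (e : Edge) : Prop :=
  e \in F /\ exists2 v, v \in VH S & component_is F v (ends e) [fset e].

Definition clar_cover (S : {fset Cell}) (F : {fset Edge}) : Prop :=
  F `<=` EH S /\
  forall v, v \in VH S ->
    (exists2 h, h \in S & component_is F v (hex_vertices h) (hex_edges h)) \/
    (exists2 e, e \in F & component_is F v (ends e) [fset e]).

Definition fC (S : {fset Cell}) (F : {fset Edge}) (M : {fset Edge}) : Prop :=
  perfect_matching S M /\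
  (forall h, hex_comp S F h -> alternating M h) /\
  (forall e, edge_comp S F e -> e \in M).

Definition cube_adj (n : nat) (x y : {ffun 'I_n -> bool}) : bool :=
  #|[set i | x i != y i]| == 1%N.

(* Main.v *)
Require Import Defs.
From HB Require Import structures.
From mathcomp Require Import all_boot all_order all_algebra.
From mathcomp Require Import finmap zify.
Import Order.TTheory GRing.Theory Num.Theory.
Set Implicit Arguments. Unset Strict Implicit. Unset Printing Implicit Defensive.
Local Open Scope fset_scope.

Definition altm (b : bool) (c : Cell) : {fset Edge} :=
  let: (i, j) := c in
  if b then [fset ((i + 1, j)%R, false); ((i + 1, j + 1)%R, false); ((i, j), true)]
  else [fset ((i, j), false); ((i + 2, j)%R, true); ((i, j + 1)%R, false)].

Ltac splitH := repeat match goal with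
  | H : is_true (_ || _) |- _ => case/orP: H => H
  | H : is_true (_ == _) |- _ => move/eqP: H => H; subst
  end.

Lemma G4 b c e e' v : e \in altm b c -> e' \in altm b c -> v \in ends e -> v \in ends e' -> e = e'.
Proof.
case: c => i j; case: b; rewrite /= !inE => H1 H2; splitH;
rewrite /ends /= !inE => H3 H4; splitH; try by []; exfalso; case: H4; lia.

Qed.

Lemma mem_hex c e : (e \in hex_edges c) = (e \in hex_cycle c).
Proof. by apply/imfsetP/idP => [[x /= Hx ->]|H] //; exists e. Qed.

Lemma G1 c e v : e \in hex_edges c -> v \in ends e -> v \in hex_vertices c.
Proof.
rewrite mem_hex; case: c => i j; rewrite /= !inE => H; splitH;
rewrite /ends /= !inE => H; splitH; rewrite !xpair_eqE; lia.
Qed.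

Lemma G2a b c e : e \in altm b c -> e \in hex_edges c.
Proof.
rewrite mem_hex; case: c => i j; case: b; rewrite /= !inE => H; splitH; rewrite !eqxx ?orbT //.
Qed.

Lemma G2b c e : e \in hex_edges c -> exists b, e \in altm b c.
Proof.
rewrite mem_hex; case: c => i j; rewrite /= !inE => H; splitH;
 [exists false|exists true|exists false|exists true|exists false|exists true];
 rewrite /= !inE !eqxx ?orbT //.
Qed.

Lemma G2c b c e : e \in altm b c -> e \in altm (~~ b) c -> False.
Proof.
case: c => i j; case: b; rewrite /= !inE => H; splitH; rewrite !xpair_eqE /= ?andbF ?andbT ?orbF ?andbT; lia.
Qed.

Lemma G3 b c v : v \in hex_vertices c -> exists2 e, e \in altm b c & v \in ends e.
Proof.
case: c => i j; rewrite /= !inE => H; splitH; case: b.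
- exists ((i, j), true); [by rewrite !inE eqxx ?orbT | rewrite /ends /= !inE !xpair_eqE /=; lia].
- exists ((i, j), false); [by rewrite !inE eqxx ?orbT | rewrite /ends /= !inE !xpair_eqE /=; lia].
- exists ((i + 1, j)%R, false); [by rewrite !inE eqxx ?orbT | rewrite /ends /= !inE !xpair_eqE /=; lia].
- exists ((i, j), false); [by rewrite !inE eqxx ?orbT | rewrite /ends /= !inE !xpair_eqE /=; lia].
- exists ((i + 1, j)%R, false); [by rewrite !inE eqxx ?orbT | rewrite /ends /= !inE !xpair_eqE /=; lia].
- exists ((i + 2, j)%R, true); [by rewrite !inE eqxx ?orbT | rewrite /ends /= !inE !xpair_eqE /=; lia].
- exists ((i, j), true); [by rewrite !inE eqxx ?orbT | rewrite /ends /= !inE !xpair_eqE /=; lia].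
- exists ((i, j + 1)%R, false); [by rewrite !inE eqxx ?orbT | rewrite /ends /= !inE !xpair_eqE /=; lia].
- exists ((i + 1, j + 1)%R, false); [by rewrite !inE eqxx ?orbT | rewrite /ends /= !inE !xpair_eqE /=; lia].
- exists ((i, j + 1)%R, false); [by rewrite !inE eqxx ?orbT | rewrite /ends /= !inE !xpair_eqE /=; lia].
- exists ((i + 1, j + 1)%R, false); [by rewrite !inE eqxx ?orbT | rewrite /ends /= !inE !xpair_eqE /=; lia].
- exists ((i + 2, j)%R, true); [by rewrite !inE eqxx ?orbT | rewrite /ends /= !inE !xpair_eqE /=; lia].
Qed.

Lemma G6 c d : hex_edges d `<=` hex_edges c -> d = c.
Proof.
case: c => i j; case: d => k l /fsubsetP S.
have h1 := S ((k, l), true) ltac:(by rewrite mem_hex /= !inE eqxx ?orbT).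
have h2 := S ((k + 2, l)%R, true) ltac:(by rewrite mem_hex /= !inE eqxx ?orbT).
move: h1 h2; rewrite !mem_hex /= !inE !xpair_eqE /= ?andbF ?andbT ?orbF ?orFb => h1 h2.
apply/eqP; rewrite xpair_eqE; lia.
Qed.

Lemma G7 c e : hex_edges c = [fset e] -> False.
Proof.
case: c => i j H.
have h1 : ((i, j), false) \in [fset e] by rewrite -H mem_hex /= !inE eqxx.
have h2 : ((i + 1, j)%R, false) \in [fset e] by rewrite -H mem_hex /= !inE eqxx ?orbT.
move: h1 h2; rewrite !inE => /eqP <- /eqP [] ; lia.
Qed.

Lemma G9 c : exists e, e \in hex_edges c.
Proof. case: c => i j; exists ((i, j), false); by rewrite mem_hex /= !inE eqxx. Qed.

Lemma ends2 (T : choiceType) (a b u y : T) :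
  u \in [fset a; b] -> y \in [fset a; b] -> u != y -> [fset a; b] = [fset u; y].
Proof.
rewrite !inE => /orP[]/eqP-> /orP[]/eqP->; rewrite ?eqxx // => _; by rewrite fsetUC.
Qed.

Lemma G8 M i j : alternating M (i, j) -> altm (((i, j), false) \notin M) (i, j) `<=` M.
Proof.
rewrite /alternating /= => H; apply/fsubsetP => e.
move: H.
case E0: (((i, j), false) \in M); case E1: (((i + 1)%R, j, false) \in M);
case E2: (((i + 2)%R, j, true) \in M); case E3: (((i + 1)%R, (j + 1)%R, false) \in M);
case E4: ((i, (j + 1)%R, false) \in M); case E5: ((i, j, true) \in M) => //= _;
rewrite !inE => Hm; splitH => //.
Qed.

Lemma adjE_sym E u v : adjE E u v = adjE E v u.
Proof. by rewrite /adjE eq_sym fsetUC. Qed.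

Lemma reach_refl E u : reach E u u.
Proof. by exists [::]. Qed.

Lemma reach_trans E u v w : reach E u v -> reach E v w -> reach E u w.
Proof.
move=> [p [Hp Lp]] [q [Hq Lq]]; exists (p ++ q); split.
  by rewrite cat_path Hp Lp Hq.
by rewrite last_cat Lp.
Qed.

Lemma reach_step E u v : adjE E u v -> reach E u v.
Proof. by move=> H; exists [:: v]; rewrite /= H. Qed.

Lemma reach_sym E u v : reach E u v -> reach E v u.
Proof.
move=> [p [Hp Lp]]; elim: p u Hp Lp => [|w p IH] u /=; first by move=> _ ->; exact: reach_refl.
move=> /andP[Huw Hp] Lp; apply: reach_trans (IH w Hp Lp) _.
by apply: reach_step; rewrite adjE_sym.
Qed.

Lemma comp_refl F v X EX : component_is F v X EX -> v \in X.
Proof. by case=> H _; apply/H/reach_refl. Qed.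

Lemma comp_same F v w X Y EX EY u : component_is F v X EX -> component_is F w Y EY ->
  u \in X -> u \in Y -> X = Y /\ EX = EY.
Proof.
move=> [HX EXd] [HY EYd] uX uY.
have rvu := (HX u).2 uX; have rwu := (HY u).2 uY.
have XY : X = Y.
  apply/fsetP => x; apply/idP/idP => Hx.
    by apply/HY; eapply reach_trans; [exact rwu|]; eapply reach_trans; [exact (reach_sym rvu)|]; apply/HX.
  by apply/HX; eapply reach_trans; [exact rvu|]; eapply reach_trans; [exact (reach_sym rwu)|]; apply/HY.
by split => //; rewrite -EXd -EYd XY.
Qed.

Lemma ends_form e : exists a b, ends e = [fset a; b].
Proof. by rewrite /ends; case: e.2; do 2 eexists. Qed.

Lemma comp_edge F v X EX e u : component_is F v X EX -> e \in F -> u \in ends e -> u \in X -> e \in EX.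
Proof.
move=> [HX <-] eF ue uX; rewrite !inE /= eF /=.
apply/fsubsetP => y ye; apply/HX; apply: reach_trans ((HX u).2 uX) _.
case: (eqVneq u y) => [<-|uy]; first exact: reach_refl.
apply: reach_step; rewrite /adjE uy /=; apply/hasP; exists e => //.
have [a [b Hab]] := ends_form e; move: ue ye; rewrite Hab => ue ye.
by rewrite (ends2 ue ye uy).
Qed.

Lemma G10 M b c : (forall e, e \in altm b c -> e \in M) ->
  (forall e, e \in altm (~~ b) c -> e \notin M) -> alternating M c.
Proof.
case: c => i j; case: b => /= H1 H2; rewrite /alternating /=.
- have -> : ((i + 1, j)%R, false) \in M by apply: H1; rewrite !inE eqxx ?orbT.
  have -> : ((i + 1, j + 1)%R, false) \in M by apply: H1; rewrite !inE eqxx ?orbT.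
  have -> : ((i, j), true) \in M by apply: H1; rewrite !inE eqxx ?orbT.
  have -> : (((i, j), false) \in M) = false by apply/negbTE/H2; rewrite !inE eqxx ?orbT.
  have -> : (((i + 2, j)%R, true) \in M) = false by apply/negbTE/H2; rewrite !inE eqxx ?orbT.
  have -> : (((i, j + 1)%R, false) \in M) = false by apply/negbTE/H2; rewrite !inE eqxx ?orbT.
  by [].
- have -> : ((i, j), false) \in M by apply: H1; rewrite !inE eqxx ?orbT.
  have -> : ((i + 2, j)%R, true) \in M by apply: H1; rewrite !inE eqxx ?orbT.
  have -> : ((i, j + 1)%R, false) \in M by apply: H1; rewrite !inE eqxx ?orbT.
  have -> : (((i + 1, j)%R, false) \in M) = false by apply/negbTE/H2; rewrite !inE eqxx ?orbT.
  have -> : (((i + 1, j + 1)%R, false) \in M) = false by apply/negbTE/H2; rewrite !inE eqxx ?orbT.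
  have -> : (((i, j), true) \in M) = false by apply/negbTE/H2; rewrite !inE eqxx ?orbT.
  by [].
Qed.

Section Main.
Variables (S : {fset Cell}) (F : {fset Edge}) (Hc : {fset Cell}).
Hypothesis cov : clar_cover S F.
Hypothesis hHc : forall h, h \in Hc <-> hex_comp S F h.

Definition EF := F `\` \bigcup_(h <- Hc) hex_edges h.
Definition Mg (g : Cell -> bool) := EF `|` \bigcup_(h <- Hc) altm (g h) h.

Lemma hcomp h : h \in Hc -> exists v, component_is F v (hex_vertices h) (hex_edges h).
Proof. by case/hHc => _ [v _ Hv]; exists v. Qed.

Lemma hexF h : h \in Hc -> hex_edges h `<=` F.
Proof.
move/hcomp => [v [_ <-]]; apply/fsubsetP => e; rewrite !inE /= => /andP[] //.
Qed.

Lemma EH_VH e v : e \in EH S -> v \in ends e -> v \in VH S.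
Proof.
case/bigfcupP => c /andP[cS _] He Hv; apply/bigfcupP; exists c; [by rewrite cS | exact: G1 He Hv].
Qed.

Lemma F_VH e v : e \in F -> v \in ends e -> v \in VH S.
Proof. move=> eF; apply: EH_VH; exact: (fsubsetP cov.1). Qed.

Lemma K e v h : e \in F -> v \in ends e -> h \in Hc -> v \in hex_vertices h -> e \in hex_edges h.
Proof. move=> eF ve /hcomp [w Hw] vh; exact: comp_edge Hw eF ve vh. Qed.

Lemma EF1 e : e \in EF -> e \in F.
Proof. by rewrite in_fsetD => /andP[]. Qed.

Lemma EF2 e h : e \in EF -> h \in Hc -> e \in hex_edges h -> False.
Proof.
rewrite in_fsetD => /andP[/bigfcupP H _] hH eh; apply: H; exists h => //; by rewrite hH.
Qed.

Lemma EF3 e : e \in F -> (forall h, h \in Hc -> e \in hex_edges h -> False) -> e \in EF.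
Proof.
move=> eF H; rewrite in_fsetD eF andbT; apply/bigfcupP => -[h /andP[hH _] eh]; exact: H hH eh.
Qed.

Lemma compOf v : v \in VH S ->
  (exists2 h, h \in Hc & component_is F v (hex_vertices h) (hex_edges h)) \/
  (exists2 e, e \in EF & component_is F v (ends e) [fset e]).
Proof.
move=> vS; case: (cov.2 v vS) => [[h hS Hh]|[e eF He]].
  by left; exists h => //; apply/hHc; split => //; exists v.
right; exists e => //; apply: EF3 => // h hH eh.
have [w Hw] := hcomp hH.
have ve := comp_refl He.
have [_ E] := comp_same He Hw ve (G1 eh ve).
exact: (G7 (esym E)).
Qed.

Lemma MgF g e : e \in Mg g -> e \in F.
Proof.
rewrite in_fsetU => /orP[/EF1 //|/bigfcupP [h /andP[hH _] he]].
exact: (fsubsetP (hexF hH)) (G2a he).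
Qed.

Lemma MgP g e : e \in Mg g -> e \in EF \/ exists2 h, h \in Hc & e \in altm (g h) h.
Proof.
rewrite in_fsetU => /orP[->|/bigfcupP [h /andP[hH _] he]]; first by left.
by right; exists h.
Qed.

Lemma Mg_EF g e : e \in EF -> e \in Mg g.
Proof. by rewrite in_fsetU => ->. Qed.

Lemma Mg_alt g h e : h \in Hc -> e \in altm (g h) h -> e \in Mg g.
Proof. move=> hH he; rewrite in_fsetU; apply/orP; right; apply/bigfcupP; exists h => //; by rewrite hH. Qed.

Lemma Mg_E g v : v \in VH S -> exists2 e, e \in Mg g & v \in ends e.
Proof.
case/compOf => [[h hH Hh]|[e eF He]].
  have [e he ve] := G3 (g h) (comp_refl Hh).
  by exists e => //; exact: Mg_alt he.
by exists e; [exact: Mg_EF | exact: comp_refl He].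
Qed.

Lemma Mg_U g e e' v : e \in Mg g -> e' \in Mg g -> v \in ends e -> v \in ends e' -> e = e'.
Proof.
move=> eM e'M ve ve'.
have eF := MgF eM; have e'F := MgF e'M.
case: (MgP eM) => [eE|[h hH he]]; case: (MgP e'M) => [e'E|[h' hH' he']].
- case: (compOf (F_VH eF ve)) => [[h hH Hh]|[e'' _ He'']].
    by case: (EF2 eE hH (K eF ve hH (comp_refl Hh))).
  have := comp_edge He'' eF ve (comp_refl He''); have := comp_edge He'' e'F ve' (comp_refl He'').
  by rewrite !inE => /eqP -> /eqP ->.
- by case: (EF2 eE hH' (K eF ve hH' (G1 (G2a he') ve'))).
- by case: (EF2 e'E hH (K e'F ve' hH (G1 (G2a he) ve))).
- have [w Hw] := hcomp hH; have [w' Hw'] := hcomp hH'.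
  have [_ E] := comp_same Hw Hw' (G1 (G2a he) ve) (G1 (G2a he') ve').
  have hh' : h = h' by apply: G6; rewrite E.
  by subst h'; exact: G4 he he' ve ve'.
Qed.

Lemma card1_eq (T : choiceType) (A : {fset T}) a b : #|` A| = 1%N -> a \in A -> b \in A -> a = b.
Proof. by move/eqP/cardfs1P => [x ->]; rewrite !inE => /eqP -> /eqP ->. Qed.

Lemma Mg_PM g : perfect_matching S (Mg g).
Proof.
split.
  apply/fsubsetP => e /MgF; exact: (fsubsetP cov.1).
move=> v vS; have [e0 e0M ve0] := Mg_E g vS.
suff -> : [fset e in Mg g | v \in ends e] = [fset e0] by rewrite cardfs1.
apply/fsetP => e; rewrite [in LHS]inE /= in_fset1; apply/andP/eqP => [[eM ve]|->]; last by [].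
exact: Mg_U eM e0M ve ve0.
Qed.


Lemma ends_pt e : exists v, v \in ends e.
Proof. have [a [b ->]] := ends_form e; exists a; by rewrite !inE eqxx. Qed.

Lemma NotIn g h e : h \in Hc -> e \in altm (~~ g h) h -> e \notin Mg g.
Proof.
move=> hH he; apply/negP => eM.
have [v ve] := ends_pt e.
have [e' he' ve'] := G3 (g h) (G1 (G2a he) ve).
have E := Mg_U eM (Mg_alt hH he') ve ve'; subst e'.
exact: G2c he' he.
Qed.

Lemma Mg_alt2 g h : h \in Hc -> alternating (Mg g) h.
Proof.
move=> hH; apply: (G10 (b := g h)) => e he; [exact: Mg_alt hH he | exact: NotIn hH he].
Qed.

Lemma ec_EF e : edge_comp S F e -> e \in EF.
Proof.
case=> eF [v vS He]; apply: EF3 => // h hH eh.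
have [w Hw] := hcomp hH.
have ve := comp_refl He.
have [_ E] := comp_same He Hw ve (G1 eh ve).
exact: (G7 (esym E)).
Qed.

Lemma fC_Mg g : fC S F (Mg g).
Proof.
split; first exact: Mg_PM.
split; first by move=> h /hHc hH; exact: Mg_alt2.
by move=> e /ec_EF; exact: Mg_EF.
Qed.

Lemma Char M : fC S F M -> M = Mg (fun h => ((h.1, h.2), false) \notin M).
Proof.
move=> [PM [Halt Hec]].
set g := (fun h : Cell => ((h.1, h.2), false) \notin M).
have sub : forall e, e \in Mg g -> e \in M.
  move=> e eM; have eF := MgF eM; case: (MgP eM) => [eE|[h hH he]].
    apply: Hec; split => //.
    have [v ve] := ends_pt e; have vS := F_VH eF ve.
    case: (compOf vS) => [[h hH Hh]|[e'' _ He'']].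
      by case: (EF2 eE hH (K eF ve hH (comp_refl Hh))).
    have := comp_edge He'' eF ve (comp_refl He''); rewrite inE => /eqP E; subst e''.
    by exists v.
  have := Halt h (proj1 (hHc h) hH); move: he; rewrite /g; case: h {hH} => i j /= he Ha.
  exact: (fsubsetP (G8 Ha)).
apply/fsetP => e; apply/idP/idP; last exact: sub.
move=> eM; have [v ve] := ends_pt e.
have vS := EH_VH (fsubsetP PM.1 e eM) ve.
have [e0 e0M ve0] := Mg_E g vS.
have := card1_eq (PM.2 v vS) (a := e) (b := e0).
rewrite !inE /= eM ve (sub _ e0M) ve0 => /(_ isT isT) ->; by move: e0M; rewrite !inE.
Qed.

Lemma Mg_ext g g' : {in Hc, g =1 g'} -> Mg g = Mg g'.
Proof. move=> H; rewrite /Mg; congr (_ `|` _); apply: eq_big_seq => h hH; by rewrite H. Qed.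

Lemma SD1 g g' e : e \in Mg g -> e \notin Mg g' -> exists2 h, (h \in Hc) && (g h != g' h) & e \in hex_edges h.
Proof.
move=> eM eM'; case: (MgP eM) => [eE|[h hH he]]; first by rewrite (Mg_EF g' eE) in eM'.
exists h; last exact: G2a he.
rewrite hH /=; apply/negP => /eqP E; rewrite E in he.
by rewrite (Mg_alt hH he) in eM'.
Qed.

Lemma SD g g' : symdiff (Mg g) (Mg g') = \bigcup_(h <- Hc | g h != g' h) hex_edges h.
Proof.
apply/fsetP => e; rewrite /symdiff in_fsetU !in_fsetD; apply/idP/bigfcupP.
  case/orP => /andP[H1 H2]; first exact: SD1 H2 H1.
  by have [h /andP[hH ne] eh] := SD1 H2 H1; exists h => //; rewrite hH eq_sym.
move=> [h /andP[hH ne] eh]; have [b hb] := G2b eh.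
have gg : g' h = ~~ g h by move: ne; case: (g h); case: (g' h).
case: (eqVneq b (g h)) => E.
  apply/orP; left; subst b; rewrite (Mg_alt hH hb) andbT; apply: (NotIn hH); by rewrite gg negbK.
apply/orP; right.
have Eb : b = g' h by rewrite gg; move: E; clear hb; case: b; case: (g h).
subst b; rewrite (Mg_alt hH hb) andbT; apply: (NotIn hH); by rewrite -gg.
Qed.

Variable n : nat.
Hypothesis hcard : #|` Hc| = n.

Definition hh (i : 'I_n) : Cell := nth (0, 0)%R (enum_fset Hc) i.
Definition gy (y : {ffun 'I_n -> bool}) (h : Cell) := [exists i, (hh i == h) && y i].

Lemma hh_in i : hh i \in Hc.
Proof. by rewrite /hh; apply: mem_nth; rewrite hcard. Qed.

Lemma hh_inj : injective hh.
Proof.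
move=> i j; rewrite /hh => /eqP; rewrite nth_uniq ?hcard ?fset_uniq // => /eqP; exact: val_inj.
Qed.

Lemma hh_surj h : h \in Hc -> exists i, hh i = h.
Proof.
move=> hH; have lt : (index h (enum_fset Hc) < n)%N by rewrite -hcard index_mem.
by exists (Ordinal lt); rewrite /hh /= nth_index.
Qed.

Lemma gy_hh y i : gy y (hh i) = y i.
Proof.
apply/existsP/idP => [[j /andP[/eqP /hh_inj -> //]]|yi]; by exists i; rewrite eqxx.
Qed.

Lemma main_sec : exists phi : {ffun 'I_n -> bool} -> {fset Edge},
    injective phi /\
    (forall M, fC S F M <-> exists x, phi x = M) /\
    (forall x y, res_adj S (phi x) (phi y) <-> cube_adj x y).
Proof.
exists (fun y => Mg (gy y)); split; [|split].
- move=> x y Exy; apply/ffunP => i; case: (eqVneq (x i) (y i)) => // ne; exfalso.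
  have [e eh] := G9 (hh i).
  have : e \in symdiff (Mg (gy x)) (Mg (gy y)).
    rewrite SD; apply/bigfcupP; exists (hh i) => //; by rewrite hh_in !gy_hh ne.
  by rewrite Exy /symdiff in_fsetU !in_fsetD; case: (e \in _).
- move=> M; split => [HM|[x <-]]; last exact: fC_Mg.
  rewrite (Char HM); set g := (fun h : Cell => _).
  exists [ffun i => g (hh i)]; apply: Mg_ext => h hH.
  by have [i <-] := hh_surj hH; rewrite gy_hh ffunE.
- move=> x y; split.
    move=> [_ [_ [h0 h0S E]]]; rewrite SD in E.
    have [e0 e0h] := G9 h0; rewrite -E in e0h.
    move/bigfcupP: e0h => [h1 /andP[h1H ne1] _].
    have [i1 Ei1] := hh_surj h1H; subst h1.
    have sub : forall i, x i != y i -> hh i = h0.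
      move=> i ne; apply: G6; rewrite -E; apply: bigfcup_sup; first exact: hh_in.
      by rewrite !gy_hh.
    rewrite /cube_adj; apply/eqP.
    suff -> : [set i | x i != y i] = [set i1] by rewrite cards1.
    apply/setP => i; rewrite !inE; apply/idP/eqP => [ne|->]; last by move: ne1; rewrite !gy_hh.
    apply: hh_inj; rewrite (sub i ne) sub //; by move: ne1; rewrite !gy_hh.
  move/cards1P => [i1 Hd].
  have i1D : x i1 != y i1.
    have : i1 \in [set i | x i != y i] by rewrite Hd set11.
    by rewrite inE.
  split; first exact: Mg_PM.
  split; first exact: Mg_PM.
  exists (hh i1); first by have [] := proj1 (hHc _) (hh_in i1).
  rewrite SD; apply/fsetP => e; apply/bigfcupP/idP.
    move=> [h /andP[hH ne] eh]; have [i Ei] := hh_surj hH; subst h.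
    move: ne; rewrite !gy_hh => ne.
    have : i \in [set i | x i != y i] by rewrite inE.
    by rewrite Hd inE => /eqP <-.
  by move=> eh; exists (hh i1) => //; rewrite hh_in !gy_hh.
Qed.

End Main.

Theorem lemma1 (S : {fset Cell}) (n : nat) :
  hexagonal_system S -> kekulean S ->
  forall F : {fset Edge}, clar_cover S F ->
  (exists Hc : {fset Cell}, (forall h, h \in Hc <-> hex_comp S F h) /\ #|` Hc| = n) ->
  exists phi : {ffun 'I_n -> bool} -> {fset Edge},
    injective phi /\
    (forall M, fC S F M <-> exists x, phi x = M) /\
    (forall x y, res_adj S (phi x) (phi y) <-> cube_adj x y).
Proof.
move=> _ _ F cov [Hc [hHc hcard]].
exact: (main_sec cov hHc hcard).
Qed.
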